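(* Let $H$ be the graph consisting of two triangles $uv_1v_2$ and $uw_1w_2$ sharing exactly the vertex $u$. Let $G$ be a graph with $n$ vertices obtained from $H$ by attaching pendant edges (new leaves) to vertices of $H$, such that $a\ge1$ pendant edges are attached to $u$ and the remaining pendant edges are attached to exactly $d$ of the vertices $v_1,v_2,w_1,w_2$, where $1\le d\le 4$. Then $\operatorname{avm}(G)>\operatorname{avm}(R_n(3,3))$.
   Context: $\operatorname{avm}(G)$ is the average of $|M|$ over all maximal matchings $M$ of $G$ (a matching is maximal if not properly contained in another matching). For $n\ge 6$, $R_n(3,3)$ is the graph obtained from $H$ by attaching $n-5$ pendant edges (new leaves) to $v_1$. *)

(* Defs.v *)
From mathcomp Require Import all_boot all_order all_algebra.
Set Implicit Arguments. Unset Strict Implicit. Unset Printing Implicit Defensive.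
Import Order.TTheory GRing.Theory Num.Theory.

Section Matchings.
Variables (T : finType) (e : rel T).

Definition edges : {set {set T}} :=
  [set E | [exists x, exists y, e x y && (E == [set x; y])]].

Definition is_matching (M : {set {set T}}) : bool :=
  (M \subset edges) &&
  [forall E1 in M, forall E2 in M, (E1 != E2) ==> [disjoint E1 & E2]].

Definition is_maximal_matching (M : {set {set T}}) : bool :=
  is_matching M && ~~ [exists M' : {set {set T}}, is_matching M' && (M \proper M')].

Definition maximal_matchings : {set {set {set T}}} :=
  [set M | is_maximal_matching M].

Definition avm : rat :=
  ((\sum_(M in maximal_matchings) #|M|)%:R / (#|maximal_matchings|)%:R)%R.
End Matchings.

(* ---------- The graph H (two triangles u v1 v2, u w1 w2) with pendant leaves ----------
   Core vertices are 'I_5 : 0 = u, 1 = v1, 2 = v2, 3 = w1, 4 = w2.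
   k i = number of pendant leaves attached to core vertex i. *)
Definition PV (k : 'I_5 -> nat) : finType :=
  ('I_5 + {i : 'I_5 & 'I_(k i)})%type.

Definition H_adj (i j : 'I_5) : bool :=
  (i != j) &&
  (((val i \in [:: 0; 1; 2]) && (val j \in [:: 0; 1; 2])) ||
   ((val i \in [:: 0; 3; 4]) && (val j \in [:: 0; 3; 4]))).

Definition pend_rel (k : 'I_5 -> nat) : rel (PV k) :=
  fun x y =>
    match x, y with
    | inl i, inl j => H_adj i j
    | inl i, inr l => tag l == i
    | inr l, inl i => tag l == i
    | inr _, inr _ => false
    end.

Definition leafcount (a b1 b2 c1 c2 : nat) : 'I_5 -> nat :=
  fun i => nth 0%N [:: a; b1; b2; c1; c2] (val i).

Definition R33 (n : nat) := leafcount 0 (n - 5) 0 0 0.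

(* Main.v *)
Require Import Defs.
From mathcomp Require Import all_boot all_order all_algebra.
Import Order.TTheory GRing.Theory Num.Theory.
Set Implicit Arguments. Unset Strict Implicit. Unset Printing Implicit Defensive.

Lemma disjP (T : finType) (A B : {set T}) :
  reflect (forall x, x \in A -> x \in B -> False) [disjoint A & B].
Proof.
rewrite disjoint_subset; apply: (iffP subsetP) => H x xA.
  by move=> xB; have := H x xA; rewrite inE xB.
by rewrite inE; apply/negP => xB; apply: H xA xB.
Qed.

Lemma set2_eq (T : finType) (a b c d : T) : [set a; b] = [set c; d] ->
  (a = c /\ b = d) \/ (a = d /\ b = c).
Proof.
move=> E.
have Ha : a \in [set c; d] by rewrite -E set21.
have Hb : b \in [set c; d] by rewrite -E set22.
have Hc : c \in [set a; b] by rewrite E set21.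
have Hd : d \in [set a; b] by rewrite E set22.
case/set2P: Ha => ?; case/set2P: Hb => ?; subst; auto.
- by move/set2P: Hd => [|] ->; auto.
- by move/set2P: Hc => [|] ->; auto.
Qed.

Lemma H_adj_irr i : H_adj i i = false.
Proof. by rewrite /H_adj eqxx. Qed.

Lemma H_adj_sym i j : H_adj i j = H_adj j i.
Proof.
rewrite /H_adj eq_sym; congr (_ && _).
by rewrite (andbC (val i \in _)) (andbC (val i \in [:: 0; 3; 4])).
Qed.

Section Gen.
Variable k : 'I_5 -> nat.
Local Notation T := (PV k).
Local Notation e := (@pend_rel k).
Implicit Types f : {ffun 'I_5 -> option T}.

Lemma e_sym : symmetric e.
Proof. by case=> [i|l] [j|m] //=; rewrite H_adj_sym. Qed.

Lemma e_irr x : e x x = false.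
Proof. by case: x => [i|l] //=; rewrite H_adj_irr. Qed.

Lemma e_neq x y : e x y -> x != y.
Proof. by apply: contraTneq => ->; rewrite e_irr. Qed.

Lemma edgesP (E : {set T}) :
  reflect (exists x y, e x y /\ E = [set x; y]) (E \in edges e).
Proof.
rewrite inE; apply: (iffP existsP) => [[x /existsP [y /andP [H /eqP ->]]] | [x [y [H ->]]]].
  by exists x, y.
by exists x; apply/existsP; exists y; rewrite H eqxx.
Qed.

Lemma matchingP (M : {set {set T}}) :
  reflect (M \subset edges e /\
     forall E1 E2, E1 \in M -> E2 \in M -> E1 != E2 -> [disjoint E1 & E2])
   (is_matching e M).
Proof.
apply: (iffP andP) => [[H1 /forall_inP H2] | [H1 H2]]; split => //.
  by move=> E1 E2 h1 h2; move: (H2 E1 h1) => /forall_inP /(_ E2 h2) /implyP; apply.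
by apply/forall_inP => E1 h1; apply/forall_inP => E2 h2; apply/implyP; apply: H2.
Qed.

Definition enc (M : {set {set T}}) : {ffun 'I_5 -> option T} :=
  [ffun x => [pick y | [set inl x; y] \in M]].
Definition keep (x : 'I_5) (y : T) : bool := if y is inl j then (x < j)%N else true.
Definition dsel (f : {ffun 'I_5 -> option T}) x : bool :=
  if f x is Some y then keep x y else false.
Definition dec (f : {ffun 'I_5 -> option T}) : {set {set T}} :=
  [set [set inl x; odflt (inl x) (f x)] | x in dsel f].

Definition good (f : {ffun 'I_5 -> option T}) : Prop :=
 [/\ (forall x j, f x = Some (inl j) -> H_adj x j /\ f j = Some (inl x)),
     (forall x l, f x = Some (inr l) -> tag l = x),
     (forall x, f x = None -> k x = 0) &
     (forall i j, H_adj i j -> f i != None \/ f j != None)].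

Lemma mem_decP f E : reflect (exists x y, [/\ f x = Some y, keep x y & E = [set inl x; y]]) (E \in dec f).
Proof.
apply: (iffP imsetP) => [[x] | [x [y [fx kx ->]]]].
  rewrite unfold_in /dsel; case fx: (f x) => [y|] // kx ->; by exists x, y.
by exists x; rewrite ?unfold_in /dsel ?fx.
Qed.

Lemma mem_dec f x y : good f -> f x = Some y -> [set inl x; y] \in dec f.
Proof.
case=> F1 F2 F3 F4 fx; apply/mem_decP.
case: y fx => [j|l] fx; last by exists x, (inr l).
have [adj fj] := F1 _ _ fx.
case: (ltngtP x j) => h.
- by exists x, (inl j).
- by exists j, (inl x); rewrite setUC.
- by move: adj; rewrite (val_inj h) H_adj_irr.
Qed.

Lemma dec_vert f E x : good f -> E \in dec f -> inl x \in E ->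
  exists y, f x = Some y /\ E = [set inl x; y].
Proof.
move=> G /mem_decP [z [w [fz _ ->]]] /set2P [xz|xw].
  by case: xz => ?; subst z; exists w.
case: G => F1 _ _ _; subst w; have [_ fx] := F1 _ _ fz.
by exists (inl z); rewrite setUC.
Qed.

Lemma dec_leaf f E l : good f -> E \in dec f -> inr l \in E ->
  f (tag l) = Some (inr l) /\ E = [set inl (tag l); inr l].
Proof.
move=> G /mem_decP [z [w [fz _ ->]]] /set2P [//|lw]; subst w.
by case: G => _ F2 _ _; rewrite (F2 _ _ fz).
Qed.


Lemma tag_pos (l : {i : 'I_5 & 'I_(k i)}) : (0 < k (tag l))%N.
Proof. exact: leq_ltn_trans (leq0n _) (ltn_ord (tagged l)). Qed.

Lemma dec_matching f : good f -> is_matching e (dec f).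
Proof.
move=> G; apply/matchingP; split.
  apply/subsetP => E /mem_decP [x [y [fx _ ->]]]; apply/edgesP; exists (inl x), y; split=> //.
  case: G => F1 F2 _ _; case: y fx => [j|l] fx /=.
    by case: (F1 _ _ fx).
  by rewrite (F2 _ _ fx).
move=> E1 E2 h1 h2 ne; apply/disjP => v v1 v2; apply: (negP ne).
case: v v1 v2 => [x|l] v1 v2.
  have [y1 [f1 ->]] := dec_vert G h1 v1; have [y2 [f2 ->]] := dec_vert G h2 v2.
  by rewrite f1 in f2; case: f2 => ->.
by have [_ ->] := dec_leaf G h1 v1; have [_ ->] := dec_leaf G h2 v2.
Qed.

Lemma dec_cover_v f x : good f -> f x != None -> exists2 E', E' \in dec f & inl x \in E'.
Proof.
move=> G; case fx: (f x) => [y|] // _; exists [set inl x; y]; last exact: set21.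
exact: mem_dec.
Qed.

Lemma dec_cover f E : good f -> E \in edges e ->
  exists2 E', E' \in dec f & exists v, v \in E /\ v \in E'.
Proof.
move=> G /edgesP [p [q [epq ->]]]; have G' := G; case: G' => F1 F2 F3 F4.
case: p q epq => [i|l] [j|m] //= epq.
- case: (F4 _ _ epq) => /(dec_cover_v G) [E' h1 h2]; exists E' => //.
    by exists (inl i); rewrite set21.
  by exists (inl j); rewrite set22.
- have : f i != None.
    apply/eqP => fi; have := tag_pos m; by rewrite (eqP epq) F3.
  case/(dec_cover_v G) => E' h1 h2; exists E' => //; by exists (inl i); rewrite set21.
- have : f j != None.
    apply/eqP => fi; have := tag_pos l; by rewrite (eqP epq) F3.
  case/(dec_cover_v G) => E' h1 h2; exists E' => //; by exists (inl j); rewrite set22.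
Qed.

Lemma dec_maximal f : good f -> is_maximal_matching e (dec f).
Proof.
move=> G; rewrite /is_maximal_matching dec_matching //=.
apply/existsP => [[M' /andP [mM' /properP [sub [E EM' nE]]]]].
move/matchingP: mM' => [sM dis].
have Eedge : E \in edges e by apply: (subsetP sM).
have [E' E'd [v [vE vE']]] := dec_cover G Eedge.
have ne : E != E' by apply: contraNneq nE => ->.
by move/disjP: (dis E E' EM' (subsetP sub _ E'd) ne); apply; eauto.
Qed.

Lemma enc_dec f : good f -> enc (dec f) = f.
Proof.
move=> G; apply/ffunP => x; rewrite ffunE; case: pickP => [y /= H | H].
  have [y' [fx E]] := dec_vert G H (set21 _ _).
  case: (set2_eq E) => [[_ ->] | [xy' _]] //.
  subst y'; case: G => F1 _ _ _; have [] := F1 _ _ fx; by rewrite H_adj_irr.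
case fx: (f x) => [y|] //; have := H y; by rewrite /= mem_dec.
Qed.

Section Max.
Variable M : {set {set T}}.
Hypothesis maxM : is_maximal_matching e M.

Let mM : is_matching e M. Proof. by case/andP: maxM. Qed.

Lemma edgeM E : E \in M -> exists p q, e p q /\ E = [set p; q].
Proof. by move=> h; apply/edgesP; move/matchingP: mM => [/subsetP s _]; apply: s. Qed.

Lemma edge_e a b : [set a; b] \in M -> e a b.
Proof.
case/edgeM => p [q [epq /set2_eq [[-> ->]|[-> ->]]]] //; by rewrite e_sym.
Qed.

Lemma enc_mem x y : enc M x = Some y -> [set inl x; y] \in M.
Proof. by rewrite ffunE; case: pickP => // y' h [<-]. Qed.

Lemma uniq_partner x y : [set inl x; y] \in M -> enc M x = Some y.
Proof.
move=> h; rewrite ffunE; case: pickP => [y' h'|H]; last by rewrite H in h.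
case E: ([set inl x; y'] == [set inl x; y]).
  case: (set2_eq (eqP E)) => [[_ ->] //| [xy _]].
  by have := edge_e h; rewrite -xy e_irr.
move/matchingP: mM => [_ dis]; move/disjP: (dis _ _ h' h (negbT E)).
by move/(_ (inl x)); rewrite !set21 => /(_ isT isT).
Qed.

Lemma covered_v E x : E \in M -> inl x \in E -> enc M x != None.
Proof.
move=> h; have [p [q [_ Eq]]] := edgeM h; subst E.
case/set2P => ?; subst.
  by rewrite (uniq_partner h).
by rewrite setUC in h; rewrite (uniq_partner h).
Qed.

Lemma covered_l E l : E \in M -> inr l \in E -> enc M (tag l) != None.
Proof.
move=> h; have [p [q [epq Eq]]] := edgeM h; subst E.
case/set2P => ?; subst.
  case: q epq h => [i|m] //= /eqP <- h.
  by rewrite setUC in h; rewrite (uniq_partner h).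
case: p epq h => [i|m] //= /eqP <- h.
by rewrite (uniq_partner h).
Qed.

Lemma extend E : E \in edges e ->
  (forall v, v \in E -> forall E2, E2 \in M -> v \in E2 -> False) -> False.
Proof.
move=> Ee H.
have EnM : E \notin M.
  apply/negP => EM; case/edgesP: Ee => p [q [_ Eq]].
  by apply: (H p) EM _; rewrite Eq set21.
move/andP: maxM => [_ /negP]; apply; apply/existsP; exists (E |: M).
apply/andP; split; last first.
  apply/properP; split; first exact: subsetUr.
  by exists E; rewrite ?setU11.
apply/matchingP; split.
  apply/subsetP => E1 /setU1P [->|]; first by [].
  by move/matchingP: mM => [/subsetP s _]; apply: s.
move/matchingP: mM => [_ dis].
move=> E1 E2 /setU1P [->|h1] /setU1P [->|h2] ne.
- by rewrite eqxx in ne.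
- by apply/disjP => v v1 v2; apply: (H v v1 E2).
- by apply/disjP => v v1 v2; apply: (H v v2 E1).
- exact: dis.
Qed.

Lemma enc_good : good (enc M).
Proof.
split.
- move=> x j /enc_mem h; split; first by have := edge_e h.
  by rewrite setUC in h; rewrite (uniq_partner h).
- by move=> x l /enc_mem /edge_e /= /eqP.
- move=> x fx; case: (posnP (k x)) => // kpos; exfalso.
  pose l := Tagged (fun i => 'I_(k i)) (Ordinal kpos : 'I_(k x)).
  apply: (extend (E := [set inl x; inr l])).
    by apply/edgesP; exists (inl x), (inr l); split => //=.
  move=> v /set2P [->|->] E2 h2 v2.
    by have := covered_v h2 v2; rewrite fx.
  by have := covered_l h2 v2; rewrite /= fx.
- move=> i j adj.
  case fi: (enc M i) => [y|]; first by left.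
  case fj: (enc M j) => [y|]; first by right.
  exfalso; apply: (extend (E := [set inl i; inl j])).
    by apply/edgesP; exists (inl i), (inl j); split => //=.
  move=> v /set2P [->|->] E2 h2 v2.
    by have := covered_v h2 v2; rewrite fi.
  by have := covered_v h2 v2; rewrite fj.
Qed.

Lemma dec_enc : dec (enc M) = M.
Proof.
apply/setP => E; apply/idP/idP.
  by case/mem_decP => x [y [fx _ ->]]; apply: enc_mem.
move=> h; have [p [q [epq Eq]]] := edgeM h; subst E.
case: p epq h => [i|l] epq h.
  by apply: mem_dec; [exact: enc_good | exact: uniq_partner].
case: q epq h => [j|m] //= /eqP tj h; rewrite setUC in h *.
by apply: mem_dec; [exact: enc_good | exact: uniq_partner].
Qed.

End Max.

End Gen.

Definition O5 : seq 'I_5 :=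
  [:: @Ordinal 5 0 isT; @Ordinal 5 1 isT; @Ordinal 5 2 isT; @Ordinal 5 3 isT; @Ordinal 5 4 isT].

Lemma mem_O5 (x : 'I_5) : x \in O5.
Proof. by case: x => [[|[|[|[|[|m]]]]] Hm] //; apply/eqP. Qed.

Lemma allO5P (P : pred 'I_5) : reflect (forall x, P x) (all P O5).
Proof.
apply: (iffP allP) => H x //; apply: H; exact: mem_O5.
Qed.

Lemma perm_O5 : perm_eq O5 (index_enum 'I_5).
Proof.
apply: uniq_perm => //; first exact: index_enum_uniq.
by move=> x; rewrite mem_index_enum mem_O5.
Qed.

Definition coreok (h : 'I_5 -> option 'I_5) : bool :=
  all (fun x => all (fun j => (h x == Some j) ==> H_adj x j && (h j == Some x)) O5) O5.

Lemma coreok_ext h h' : (forall x, h x = h' x) -> coreok h = coreok h'.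
Proof.
by move=> E; rewrite /coreok; apply: eq_all => x; apply: eq_all => j; rewrite !E.
Qed.

Section Count.
Variable k : 'I_5 -> nat.
Local Notation T := (PV k).
Local Notation e := (@pend_rel k).
Implicit Types f : {ffun 'I_5 -> option T}.

Definition validf (h : 'I_5 -> option 'I_5) : bool :=
  all (fun i => all (fun j => H_adj i j ==>
     [|| h i != None, k i != 0, h j != None | k j != 0]) O5) O5.

Definition A (h : 'I_5 -> option 'I_5) (x : 'I_5) : pred (option T) := fun o =>
  match h x with
  | Some j => o == Some (inl j)
  | None => match o with None => k x == 0 | Some (inl _) => false | Some (inr l) => tag l == x end
  end.

Definition pat f : {ffun 'I_5 -> option 'I_5} :=
  [ffun x => if f x is Some (inl j) then Some j else None].

Definition inU f : bool :=
  [&& coreok (pat f), validf (pat f) & all (fun x => A (pat f) x (f x)) O5].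

Lemma inU_good f : inU f <-> good f.
Proof.
split.
  case/and3P => /allO5P co /allO5P va /allO5P fa; split.
  - move=> x j fx.
    have px : pat f x = Some j by rewrite ffunE fx.
    move: (co x) => /allO5P /(_ j); rewrite px eqxx /= => /andP [adj /eqP pj].
    split=> //; move: pj; rewrite ffunE; case: (f j) => [[i|l]|] //= [->] //.
  - move=> x l fx; have := fa x; rewrite /A ffunE fx /= => /eqP //.
  - move=> x fx; have := fa x; rewrite /A ffunE fx /= => /eqP //.
  - move=> i j adj; move: (va i) => /allO5P /(_ j); rewrite adj /=.
    have H z : (pat f z != None) || (k z != 0) -> f z != None.
      case/orP; first by rewrite ffunE; case: (f z).
      apply: contra_neq => fz; have := fa z; rewrite /A ffunE fz /= => /eqP //.
    case/or4P => h; [left|left|right|right]; apply: H; by rewrite h ?orbT.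
case=> F1 F2 F3 F4; apply/and3P; split.
- apply/allO5P => x; apply/allO5P => j; apply/implyP.
  rewrite ffunE; case fx: (f x) => [[i|l]|] //= /eqP [<-].
  have [adj fi] := F1 _ _ fx; by rewrite adj ffunE fi eqxx.
- apply/allO5P => i; apply/allO5P => j; apply/implyP => adj.
  have H z : f z != None -> (pat f z != None) || (k z != 0).
    rewrite ffunE; case fz: (f z) => [[m|l]|] //= _.
    by rewrite -lt0n -(F2 _ _ fz) tag_pos.
  by case: (F4 _ _ adj) => /H /orP [] ->; rewrite ?orbT.
- apply/allO5P => x; rewrite /A ffunE; case fx: (f x) => [[j|l]|] /=.
  + by rewrite eqxx.
  + by rewrite (F2 _ _ fx).
  + by rewrite (F3 _ fx).
Qed.

Definition Uset := [set f | inU f].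

Lemma dec_inj : {in Uset &, injective (fun f : {ffun 'I_5 -> option T} => dec f)}.
Proof.
move=> f1 f2; rewrite !inE => /inU_good h1 /inU_good h2 E.
by rewrite -(enc_dec h1) -(enc_dec h2) E.
Qed.

Lemma max_eq : maximal_matchings e = @dec k @: Uset.
Proof.
apply/setP => M; rewrite inE; apply/idP/imsetP.
  move=> mM; exists (enc M); last by rewrite dec_enc.
  by rewrite inE; apply/inU_good; apply: enc_good.
by case=> f; rewrite inE => /inU_good G ->; apply: dec_maximal.
Qed.

Lemma card_max : #|maximal_matchings e| = #|Uset|.
Proof. by rewrite max_eq card_in_imset //; apply: dec_inj. Qed.

Lemma sum_max : \sum_(M in maximal_matchings e) #|M| = \sum_(f in Uset) #|dec f|.
Proof. by rewrite max_eq big_imset //; apply: dec_inj. Qed.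


Definition sel (h : 'I_5 -> option 'I_5) (x : 'I_5) : bool :=
  match h x with Some j => (x < j)%N | None => k x != 0 end.
Definition wA (h : 'I_5 -> option 'I_5) (x : 'I_5) : nat :=
  if h x is Some _ then 1 else k x + (k x == 0).
Definition szn (h : 'I_5 -> option 'I_5) : nat := sumn (map (fun x => nat_of_bool (sel h x)) O5).
Definition wtn (h : 'I_5 -> option 'I_5) : nat := foldr muln 1 (map (wA h) O5).

Lemma bigseqE (F : 'I_5 -> nat) s :
  (\sum_(x <- s) F x = sumn (map F s)) * (\prod_(x <- s) F x = foldr muln 1 (map F s)).
Proof. by elim: s => [|x s [IH1 IH2]]; rewrite ?big_nil ?big_cons ?IH1 ?IH2. Qed.

Lemma sumO5 (F : 'I_5 -> nat) : \sum_(x : 'I_5) F x = sumn (map F O5).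
Proof.
by rewrite -(perm_big _ perm_O5) /= bigseqE.
Qed.

Lemma prodO5 (F : 'I_5 -> nat) : \prod_(x : 'I_5) F x = foldr muln 1 (map F O5).
Proof.
by rewrite -(perm_big _ perm_O5) /= bigseqE.
Qed.

Lemma card_dec f : inU f -> #|dec f| = szn (pat f).
Proof.
move/inU_good => G; have G' := G; case: G' => F1 F2 F3 F4.
rewrite card_in_imset; last first.
  move=> x1 x2; rewrite !unfold_in /dsel.
  case f1: (f x1) => [y1|] // k1; case f2: (f x2) => [y2|] // k2 /=.
  case/set2_eq => [[[] //]| [E1 E2]].
  subst; rewrite /keep in k1 k2.
  by have := ltn_trans k1 k2; rewrite ltnn.
rewrite /szn -sumO5 -sum1_card big_mkcond /=; apply: eq_bigr => x _.
rewrite unfold_in /dsel /sel ffunE; case fx: (f x) => [[j|l]|] //=.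
- by rewrite -(F2 _ _ fx) -lt0n tag_pos.
- by rewrite F3.
Qed.

Lemma cardA (h : 'I_5 -> option 'I_5) x : #|A h x| = wA h x.
Proof.
rewrite /wA; case hx: (h x) => [j|].
  by apply: (@eq_card1 _ (Some (inl j))) => o; rewrite unfold_in /A hx inE.
case: (posnP (k x)) => kx.
  rewrite kx /=; apply: (@eq_card1 _ None) => o; rewrite unfold_in /A hx.
  case: o => [[i|l]|] //=; rewrite inE /=; last by rewrite kx.
  apply/negbTE; apply/negP => /eqP tl; have := tag_pos l; by rewrite tl kx.
rewrite addn0.
pose hh := fun i : 'I_(k x) => Some (@inr 'I_5 {i : 'I_5 & 'I_(k i)} (Tagged (fun i => 'I_(k i)) i)) : option T.
have hinj : injective hh.
  by move=> i1 i2 [] E; apply: eq_from_Tagged E.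
rewrite -{1}(card_ord (k x)) -(card_codom hinj).
apply: eq_card => o; rewrite unfold_in /A hx; apply/idP/codomP.
  case: o => [[i|l]|] //=; last by rewrite eqn0Ngt kx.
  case: l => i m /= /eqP ix; subst i; by exists m.
by case=> m ->; rewrite /= eqxx.
Qed.

Definition fam (g : 'I_5 -> option 'I_5) f : bool := all (fun x => A g x (f x)) O5.

Lemma card_fam (g : 'I_5 -> option 'I_5) : #|[pred f | fam g f]| = wtn g.
Proof.
rewrite (eq_card (B := pfamily None predT (A g))); last first.
  move=> f; rewrite inE /fam; apply/allO5P/pfamilyP => [H|[_ H] x].
    split; first by apply/subsetP.
    by move=> x _; rewrite unfold_in; apply: H.
  by have := H x isT; rewrite unfold_in.
rewrite card_pfamily /image_mem.
have -> : foldr muln 1 [seq #|A g x| | x <- enum (mem predT)] = \prod_(x <- enum (mem (@predT 'I_5))) #|A g x|.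
  by rewrite (bigseqE _ _).2.
by rewrite big_enum prodO5 /wtn; congr foldr; apply: eq_map => x; apply: cardA.
Qed.

Lemma fib_eq (g : {ffun 'I_5 -> option 'I_5}) f :
  (f \in Uset) && (pat f == g) = [&& coreok g, validf g & fam g f].
Proof.
rewrite inE; apply/idP/idP.
  by case/andP => /and3P [c v a] /eqP <-; rewrite c v /fam a.
case/and3P => c v a.
have pg : pat f = g.
  apply/ffunP => x; move/allO5P: a => /(_ x); rewrite /A ffunE.
  by case: (g x) => [j /eqP -> //|]; case: (f x) => [[i|l]|].
by rewrite pg eqxx andbT /inU pg c v; exact: a.
Qed.

Lemma card_Uset :
  #|Uset| = \sum_(g : {ffun 'I_5 -> option 'I_5}) coreok g * (validf g * wtn g).
Proof.
rewrite -sum1_card (partition_big (fun f => pat f) predT) //=.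
apply: eq_bigr => g _.
rewrite (eq_bigl (fun f => f \in [pred f | [&& coreok g, validf g & fam g f]])); last first.
  by move=> f; rewrite fib_eq inE.
rewrite sum1_card.
case: (coreok g) => /=; last by rewrite eq_card0.
case: (validf g) => /=; last by rewrite eq_card0.
by rewrite !mul1n card_fam.
Qed.

Lemma sum_Uset :
  \sum_(f in Uset) #|dec f| = \sum_(g : {ffun 'I_5 -> option 'I_5}) coreok g * (validf g * (szn g * wtn g)).
Proof.
rewrite (partition_big (fun f => pat f) predT) //=.
apply: eq_bigr => g _.
rewrite (eq_bigr (fun _ => szn g)); last first.
  by move=> f /andP [fU /eqP <-]; rewrite card_dec //; rewrite inE in fU.
rewrite (eq_bigl (fun f => f \in [pred f | [&& coreok g, validf g & fam g f]])); last first.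
  by move=> f; rewrite fib_eq inE.
rewrite sum_nat_const.
case: (coreok g) => /=; last by rewrite eq_card0.
case: (validf g) => /=; last by rewrite eq_card0.
by rewrite !mul1n card_fam mulnC.
Qed.

End Count.

Definition Vals : seq (option 'I_5) := None :: map Some O5.
Fixpoint tuples n : seq (seq (option 'I_5)) :=
  if n is n'.+1 then [seq x :: r | x <- Vals, r <- tuples n'] else [:: [::]].

Lemma mem_tuples n t : size t = n -> t \in tuples n.
Proof.
elim: n t => [|n IH] [|x r] // [sr].
change (x :: r \in [seq x :: r | x <- Vals, r <- tuples n]).
apply: allpairs_f; last exact: IH.
case: x => [x|]; last by rewrite inE.
have H := map_f Some (mem_O5 x); by rewrite /Vals in_cons H orbT.
Qed.

Definition o0 : 'I_5 := @Ordinal 5 0 isT.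
Definition o1 : 'I_5 := @Ordinal 5 1 isT.
Definition o2 : 'I_5 := @Ordinal 5 2 isT.
Definition o3 : 'I_5 := @Ordinal 5 3 isT.
Definition o4 : 'I_5 := @Ordinal 5 4 isT.

Definition Lt : seq (seq (option 'I_5)) :=
 [:: [:: None; None; None; None; None];
     [:: Some o1; Some o0; None; None; None];
     [:: Some o2; None; Some o0; None; None];
     [:: None; Some o2; Some o1; None; None];
     [:: Some o3; None; None; Some o0; None];
     [:: Some o4; None; None; None; Some o0];
     [:: None; None; None; Some o4; Some o3];
     [:: None; Some o2; Some o1; Some o4; Some o3];
     [:: Some o3; Some o2; Some o1; Some o0; None];
     [:: Some o4; Some o2; Some o1; None; Some o0];
     [:: Some o1; Some o0; None; Some o4; Some o3];
     [:: Some o2; None; Some o0; Some o4; Some o3]].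

Lemma comp1 : all (fun t => coreok (fun x => nth None t x) ==> (t \in Lt)) (tuples 5).
Proof. vm_compute. reflexivity. Qed.

Lemma comp2 : all (fun t => coreok (fun x => nth None t x) && (size t == 5)) Lt && uniq Lt.
Proof. vm_compute. reflexivity. Qed.

Lemma nthO5 x0 (x : 'I_5) : nth x0 O5 x = x.
Proof. by case: x => [[|[|[|[|[|m]]]]] Hm] //; apply/val_inj. Qed.

Definition ff (t : seq (option 'I_5)) : {ffun 'I_5 -> option 'I_5} := [ffun x : 'I_5 => nth None t x].

Lemma ff_map (g : {ffun 'I_5 -> option 'I_5}) : g = ff (map g O5).
Proof.
apply/ffunP => x; rewrite ffunE (nth_map x); first by rewrite nthO5.
by case: x.
Qed.

Lemma coreok_mem (g : {ffun 'I_5 -> option 'I_5}) : coreok g = (g \in map ff Lt).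
Proof.
case/andP: comp2 => /allP c2 _.
apply/idP/mapP.
  move=> cg; exists (map g O5); last exact: ff_map.
  have := allP comp1 _ (mem_tuples (size_map g O5)).
  rewrite -(coreok_ext (h := g)) ?cg //= => x.
  by rewrite {1}(ff_map g) ffunE.
case=> t tL ->; have /andP [ct _] := c2 t tL.
by rewrite (coreok_ext (h' := fun x => nth None t x)) // => x; rewrite ffunE.
Qed.

Lemma reindex (Phi : ('I_5 -> option 'I_5) -> nat) :
  (forall h h', (forall x, h x = h' x) -> Phi h = Phi h') ->
  \sum_(g : {ffun 'I_5 -> option 'I_5}) coreok g * Phi g = \sum_(t <- Lt) Phi (fun x => nth None t x).
Proof.
move=> Pext.
rewrite (eq_bigr (fun g : {ffun 'I_5 -> option 'I_5} => if coreok g then Phi g else 0)); last first.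
  by move=> g _; case: (coreok g); rewrite ?mul1n.
rewrite -big_mkcond (eq_bigl (fun g => g \in map ff Lt)); last by move=> g; rewrite coreok_mem.
case/andP: comp2 => /allP c2 uL.
rewrite -big_uniq; last first.
  rewrite map_inj_in_uniq // => t1 t2 h1 h2 E.
  have /andP [_ /eqP s1] := c2 _ h1; have /andP [_ /eqP s2] := c2 _ h2.
  apply: (@eq_from_nth _ None); first by rewrite s1 s2.
  move=> i; rewrite s1 => ilt.
  have := congr1 (fun g : {ffun 'I_5 -> option 'I_5} => g (Ordinal ilt)) E.
  by rewrite /ff !ffunE.
rewrite big_map; apply: eq_bigr => t _; apply: Pext => x; by rewrite ffunE.
Qed.

Section Final.
Variable k : 'I_5 -> nat.

Lemma validf_ext h h' : (forall x, h x = h' x) -> validf k h = validf k h'.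
Proof. by move=> E; rewrite /validf; apply: eq_all => x; apply: eq_all => j; rewrite !E. Qed.
Lemma szn_ext h h' : (forall x, h x = h' x) -> szn k h = szn k h'.
Proof. by move=> E; rewrite /szn /sel; congr sumn; apply: eq_map => x; rewrite !E. Qed.
Lemma wtn_ext h h' : (forall x, h x = h' x) -> wtn k h = wtn k h'.
Proof. by move=> E; rewrite /wtn /wA; congr foldr; apply: eq_map => x; rewrite !E. Qed.

Definition Ncnt := \sum_(t <- Lt) validf k (fun x => nth None t x) * wtn k (fun x => nth None t x).
Definition Nsum := \sum_(t <- Lt) validf k (fun x => nth None t x) *
   (szn k (fun x => nth None t x) * wtn k (fun x => nth None t x)).

Lemma card_formula : #|maximal_matchings (@pend_rel k)| = Ncnt.
Proof.
rewrite card_max card_Uset (@reindex (fun h => validf k h * wtn k h)) //.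
by move=> h h' E; rewrite (validf_ext E) (wtn_ext E).
Qed.

Lemma sum_formula : \sum_(M in maximal_matchings (@pend_rel k)) #|M| = Nsum.
Proof.
rewrite sum_max sum_Uset (@reindex (fun h => validf k h * (szn k h * wtn k h))) //.
by move=> h h' E; rewrite (validf_ext E) (wtn_ext E) (szn_ext E).
Qed.

Lemma avm_formula : avm (@pend_rel k) = (Nsum%:R / Ncnt%:R)%R.
Proof. by rewrite /avm sum_formula card_formula. Qed.
End Final.

From mathcomp Require Import ring zify.

Lemma lt_cert (x y d : nat) : y = x + 1 + d -> x < y.
Proof. move=> ->; lia. Qed.

Lemma frac_lt (x y z w : nat) : [/\ 0 < y, 0 < w & x * w < z * y] ->
  ((x%:R / y%:R : rat) < z%:R / w%:R)%R.
Proof.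
case=> y0 w0 h.
rewrite ltr_pdivrMr ?ltr0n // mulrAC ltr_pdivlMr ?ltr0n //.
by rewrite -!natrM ltr_nat.
Qed.

Lemma case_0001 (a c2 : nat) :
  [/\ 0 < Ncnt (leafcount 0 (a + 0 + 0 + 0 + c2.+1).+1 0 0 0), 0 < Ncnt (leafcount a.+1 0 0 0 c2.+1) &
   Nsum (leafcount 0 (a + 0 + 0 + 0 + c2.+1).+1 0 0 0) * Ncnt (leafcount a.+1 0 0 0 c2.+1) < Nsum (leafcount a.+1 0 0 0 c2.+1) * Ncnt (leafcount 0 (a + 0 + 0 + 0 + c2.+1).+1 0 0 0)].
Proof.
rewrite /Ncnt /Nsum /Lt !big_cons !big_nil /validf /szn /sel /wtn /wA /leafcount /=.
split.
- by apply: (lt_cert (d := 9 + 3*c2 + 3*a)); ring.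
- by apply: (lt_cert (d := 7 + 4*c2 + 2*a + a*c2)); ring.
- by apply: (lt_cert (d := 13 + 13*c2 + 2*c2*c2 + 17*a + 14*a*c2 + 2*a*c2*c2 + 4*a*a + 2*a*a*c2)); ring.
Qed.

Lemma case_0010 (a c1 : nat) :
  [/\ 0 < Ncnt (leafcount 0 (a + 0 + 0 + c1.+1 + 0).+1 0 0 0), 0 < Ncnt (leafcount a.+1 0 0 c1.+1 0) &
   Nsum (leafcount 0 (a + 0 + 0 + c1.+1 + 0).+1 0 0 0) * Ncnt (leafcount a.+1 0 0 c1.+1 0) < Nsum (leafcount a.+1 0 0 c1.+1 0) * Ncnt (leafcount 0 (a + 0 + 0 + c1.+1 + 0).+1 0 0 0)].
Proof.
rewrite /Ncnt /Nsum /Lt !big_cons !big_nil /validf /szn /sel /wtn /wA /leafcount /=.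
split.
- by apply: (lt_cert (d := 9 + 3*c1 + 3*a)); ring.
- by apply: (lt_cert (d := 7 + 4*c1 + 2*a + a*c1)); ring.
- by apply: (lt_cert (d := 13 + 13*c1 + 2*c1*c1 + 17*a + 14*a*c1 + 2*a*c1*c1 + 4*a*a + 2*a*a*c1)); ring.
Qed.

Lemma case_0011 (a c1 c2 : nat) :
  [/\ 0 < Ncnt (leafcount 0 (a + 0 + 0 + c1.+1 + c2.+1).+1 0 0 0), 0 < Ncnt (leafcount a.+1 0 0 c1.+1 c2.+1) &
   Nsum (leafcount 0 (a + 0 + 0 + c1.+1 + c2.+1).+1 0 0 0) * Ncnt (leafcount a.+1 0 0 c1.+1 c2.+1) < Nsum (leafcount a.+1 0 0 c1.+1 c2.+1) * Ncnt (leafcount 0 (a + 0 + 0 + c1.+1 + c2.+1).+1 0 0 0)].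
Proof.
rewrite /Ncnt /Nsum /Lt !big_cons !big_nil /validf /szn /sel /wtn /wA /leafcount /=.
split.
- by apply: (lt_cert (d := 12 + 3*c2 + 3*c1 + 3*a)); ring.
- by apply: (lt_cert (d := 7 + 4*c2 + 4*c1 + 3*c1*c2 + 2*a + a*c2 + a*c1 + a*c1*c2)); ring.
- by apply: (lt_cert (d := 66 + 66*c2 + 11*c2*c2 + 66*c1 + 65*c1*c2 + 9*c1*c2*c2 + 11*c1*c1 + 9*c1*c1*c2 + 46*a + 41*a*c2 + 5*a*c2*c2 + 41*a*c1 + 42*a*c1*c2 + 5*a*c1*c2*c2 + 5*a*c1*c1 + 5*a*c1*c1*c2 + 7*a*a + 5*a*a*c2 + 5*a*a*c1 + 5*a*a*c1*c2)); ring.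
Qed.

Lemma case_0100 (a b2 : nat) :
  [/\ 0 < Ncnt (leafcount 0 (a + 0 + b2.+1 + 0 + 0).+1 0 0 0), 0 < Ncnt (leafcount a.+1 0 b2.+1 0 0) &
   Nsum (leafcount 0 (a + 0 + b2.+1 + 0 + 0).+1 0 0 0) * Ncnt (leafcount a.+1 0 b2.+1 0 0) < Nsum (leafcount a.+1 0 b2.+1 0 0) * Ncnt (leafcount 0 (a + 0 + b2.+1 + 0 + 0).+1 0 0 0)].
Proof.
rewrite /Ncnt /Nsum /Lt !big_cons !big_nil /validf /szn /sel /wtn /wA /leafcount /=.
split.
- by apply: (lt_cert (d := 9 + 3*b2 + 3*a)); ring.
- by apply: (lt_cert (d := 7 + 4*b2 + 2*a + a*b2)); ring.
- by apply: (lt_cert (d := 13 + 13*b2 + 2*b2*b2 + 17*a + 14*a*b2 + 2*a*b2*b2 + 4*a*a + 2*a*a*b2)); ring.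
Qed.

Lemma case_0101 (a b2 c2 : nat) :
  [/\ 0 < Ncnt (leafcount 0 (a + 0 + b2.+1 + 0 + c2.+1).+1 0 0 0), 0 < Ncnt (leafcount a.+1 0 b2.+1 0 c2.+1) &
   Nsum (leafcount 0 (a + 0 + b2.+1 + 0 + c2.+1).+1 0 0 0) * Ncnt (leafcount a.+1 0 b2.+1 0 c2.+1) < Nsum (leafcount a.+1 0 b2.+1 0 c2.+1) * Ncnt (leafcount 0 (a + 0 + b2.+1 + 0 + c2.+1).+1 0 0 0)].
Proof.
rewrite /Ncnt /Nsum /Lt !big_cons !big_nil /validf /szn /sel /wtn /wA /leafcount /=.
split.
- by apply: (lt_cert (d := 12 + 3*c2 + 3*b2 + 3*a)); ring.
- by apply: (lt_cert (d := 11 + 6*c2 + 6*b2 + 3*b2*c2 + 4*a + 2*a*c2 + 2*a*b2 + a*b2*c2)); ring.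
- by apply: (lt_cert (d := 67 + 59*c2 + 9*c2*c2 + 59*b2 + 48*b2*c2 + 6*b2*c2*c2 + 9*b2*b2 + 6*b2*b2*c2 + 52*a + 37*a*c2 + 4*a*c2*c2 + 37*a*b2 + 24*a*b2*c2 + 2*a*b2*c2*c2 + 4*a*b2*b2 + 2*a*b2*b2*c2 + 8*a*a + 4*a*a*c2 + 4*a*a*b2 + 2*a*a*b2*c2)); ring.
Qed.

Lemma case_0110 (a b2 c1 : nat) :
  [/\ 0 < Ncnt (leafcount 0 (a + 0 + b2.+1 + c1.+1 + 0).+1 0 0 0), 0 < Ncnt (leafcount a.+1 0 b2.+1 c1.+1 0) &
   Nsum (leafcount 0 (a + 0 + b2.+1 + c1.+1 + 0).+1 0 0 0) * Ncnt (leafcount a.+1 0 b2.+1 c1.+1 0) < Nsum (leafcount a.+1 0 b2.+1 c1.+1 0) * Ncnt (leafcount 0 (a + 0 + b2.+1 + c1.+1 + 0).+1 0 0 0)].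
Proof.
rewrite /Ncnt /Nsum /Lt !big_cons !big_nil /validf /szn /sel /wtn /wA /leafcount /=.
split.
- by apply: (lt_cert (d := 12 + 3*c1 + 3*b2 + 3*a)); ring.
- by apply: (lt_cert (d := 11 + 6*c1 + 6*b2 + 3*b2*c1 + 4*a + 2*a*c1 + 2*a*b2 + a*b2*c1)); ring.
- by apply: (lt_cert (d := 67 + 59*c1 + 9*c1*c1 + 59*b2 + 48*b2*c1 + 6*b2*c1*c1 + 9*b2*b2 + 6*b2*b2*c1 + 52*a + 37*a*c1 + 4*a*c1*c1 + 37*a*b2 + 24*a*b2*c1 + 2*a*b2*c1*c1 + 4*a*b2*b2 + 2*a*b2*b2*c1 + 8*a*a + 4*a*a*c1 + 4*a*a*b2 + 2*a*a*b2*c1)); ring.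
Qed.

Lemma case_0111 (a b2 c1 c2 : nat) :
  [/\ 0 < Ncnt (leafcount 0 (a + 0 + b2.+1 + c1.+1 + c2.+1).+1 0 0 0), 0 < Ncnt (leafcount a.+1 0 b2.+1 c1.+1 c2.+1) &
   Nsum (leafcount 0 (a + 0 + b2.+1 + c1.+1 + c2.+1).+1 0 0 0) * Ncnt (leafcount a.+1 0 b2.+1 c1.+1 c2.+1) < Nsum (leafcount a.+1 0 b2.+1 c1.+1 c2.+1) * Ncnt (leafcount 0 (a + 0 + b2.+1 + c1.+1 + c2.+1).+1 0 0 0)].
Proof.
rewrite /Ncnt /Nsum /Lt !big_cons !big_nil /validf /szn /sel /wtn /wA /leafcount /=.
split.
- by apply: (lt_cert (d := 15 + 3*c2 + 3*c1 + 3*b2 + 3*a)); ring.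
- by apply: (lt_cert (d := 11 + 6*c2 + 6*c1 + 4*c1*c2 + 6*b2 + 3*b2*c2 + 3*b2*c1 + 2*b2*c1*c2 + 4*a + 2*a*c2 + 2*a*c1 + 2*a*c1*c2 + 2*a*b2 + a*b2*c2 + a*b2*c1 + a*b2*c1*c2)); ring.
- by apply: (lt_cert (d := 175 + 150*c2 + 21*c2*c2 + 150*c1 + 138*c1*c2 + 17*c1*c2*c2 + 21*c1*c1 + 17*c1*c1*c2 + 134*b2 + 107*b2*c2 + 12*b2*c2*c2 + 107*b2*c1 + 97*b2*c1*c2 + 10*b2*c1*c2*c2 + 12*b2*c1*c1 + 10*b2*c1*c1*c2 + 18*b2*b2 + 12*b2*b2*c2 + 12*b2*b2*c1 + 10*b2*b2*c1*c2 + 110*a + 91*a*c2 + 10*a*c2*c2 + 91*a*c1 + 93*a*c1*c2 + 10*a*c1*c2*c2 + 10*a*c1*c1 + 10*a*c1*c1*c2 + 72*a*b2 + 57*a*b2*c2 + 5*a*b2*c2*c2 + 57*a*b2*c1 + 58*a*b2*c1*c2 + 5*a*b2*c1*c2*c2 + 5*a*b2*c1*c1 + 5*a*b2*c1*c1*c2 + 7*a*b2*b2 + 5*a*b2*b2*c2 + 5*a*b2*b2*c1 + 5*a*b2*b2*c1*c2 + 14*a*a + 10*a*a*c2 + 10*a*a*c1 + 10*a*a*c1*c2 + 7*a*a*b2 + 5*a*a*b2*c2 + 5*a*a*b2*c1 + 5*a*a*b2*c1*c2)); ring.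
Qed.

Lemma case_1000 (a b1 : nat) :
  [/\ 0 < Ncnt (leafcount 0 (a + b1.+1 + 0 + 0 + 0).+1 0 0 0), 0 < Ncnt (leafcount a.+1 b1.+1 0 0 0) &
   Nsum (leafcount 0 (a + b1.+1 + 0 + 0 + 0).+1 0 0 0) * Ncnt (leafcount a.+1 b1.+1 0 0 0) < Nsum (leafcount a.+1 b1.+1 0 0 0) * Ncnt (leafcount 0 (a + b1.+1 + 0 + 0 + 0).+1 0 0 0)].
Proof.
rewrite /Ncnt /Nsum /Lt !big_cons !big_nil /validf /szn /sel /wtn /wA /leafcount /=.
split.
- by apply: (lt_cert (d := 9 + 3*b1 + 3*a)); ring.
- by apply: (lt_cert (d := 7 + 4*b1 + 2*a + a*b1)); ring.
- by apply: (lt_cert (d := 13 + 13*b1 + 2*b1*b1 + 17*a + 14*a*b1 + 2*a*b1*b1 + 4*a*a + 2*a*a*b1)); ring.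
Qed.

Lemma case_1001 (a b1 c2 : nat) :
  [/\ 0 < Ncnt (leafcount 0 (a + b1.+1 + 0 + 0 + c2.+1).+1 0 0 0), 0 < Ncnt (leafcount a.+1 b1.+1 0 0 c2.+1) &
   Nsum (leafcount 0 (a + b1.+1 + 0 + 0 + c2.+1).+1 0 0 0) * Ncnt (leafcount a.+1 b1.+1 0 0 c2.+1) < Nsum (leafcount a.+1 b1.+1 0 0 c2.+1) * Ncnt (leafcount 0 (a + b1.+1 + 0 + 0 + c2.+1).+1 0 0 0)].
Proof.
rewrite /Ncnt /Nsum /Lt !big_cons !big_nil /validf /szn /sel /wtn /wA /leafcount /=.
split.
- by apply: (lt_cert (d := 12 + 3*c2 + 3*b1 + 3*a)); ring.
- by apply: (lt_cert (d := 11 + 6*c2 + 6*b1 + 3*b1*c2 + 4*a + 2*a*c2 + 2*a*b1 + a*b1*c2)); ring.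
- by apply: (lt_cert (d := 67 + 59*c2 + 9*c2*c2 + 59*b1 + 48*b1*c2 + 6*b1*c2*c2 + 9*b1*b1 + 6*b1*b1*c2 + 52*a + 37*a*c2 + 4*a*c2*c2 + 37*a*b1 + 24*a*b1*c2 + 2*a*b1*c2*c2 + 4*a*b1*b1 + 2*a*b1*b1*c2 + 8*a*a + 4*a*a*c2 + 4*a*a*b1 + 2*a*a*b1*c2)); ring.
Qed.

Lemma case_1010 (a b1 c1 : nat) :
  [/\ 0 < Ncnt (leafcount 0 (a + b1.+1 + 0 + c1.+1 + 0).+1 0 0 0), 0 < Ncnt (leafcount a.+1 b1.+1 0 c1.+1 0) &
   Nsum (leafcount 0 (a + b1.+1 + 0 + c1.+1 + 0).+1 0 0 0) * Ncnt (leafcount a.+1 b1.+1 0 c1.+1 0) < Nsum (leafcount a.+1 b1.+1 0 c1.+1 0) * Ncnt (leafcount 0 (a + b1.+1 + 0 + c1.+1 + 0).+1 0 0 0)].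
Proof.
rewrite /Ncnt /Nsum /Lt !big_cons !big_nil /validf /szn /sel /wtn /wA /leafcount /=.
split.
- by apply: (lt_cert (d := 12 + 3*c1 + 3*b1 + 3*a)); ring.
- by apply: (lt_cert (d := 11 + 6*c1 + 6*b1 + 3*b1*c1 + 4*a + 2*a*c1 + 2*a*b1 + a*b1*c1)); ring.
- by apply: (lt_cert (d := 67 + 59*c1 + 9*c1*c1 + 59*b1 + 48*b1*c1 + 6*b1*c1*c1 + 9*b1*b1 + 6*b1*b1*c1 + 52*a + 37*a*c1 + 4*a*c1*c1 + 37*a*b1 + 24*a*b1*c1 + 2*a*b1*c1*c1 + 4*a*b1*b1 + 2*a*b1*b1*c1 + 8*a*a + 4*a*a*c1 + 4*a*a*b1 + 2*a*a*b1*c1)); ring.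
Qed.

Lemma case_1011 (a b1 c1 c2 : nat) :
  [/\ 0 < Ncnt (leafcount 0 (a + b1.+1 + 0 + c1.+1 + c2.+1).+1 0 0 0), 0 < Ncnt (leafcount a.+1 b1.+1 0 c1.+1 c2.+1) &
   Nsum (leafcount 0 (a + b1.+1 + 0 + c1.+1 + c2.+1).+1 0 0 0) * Ncnt (leafcount a.+1 b1.+1 0 c1.+1 c2.+1) < Nsum (leafcount a.+1 b1.+1 0 c1.+1 c2.+1) * Ncnt (leafcount 0 (a + b1.+1 + 0 + c1.+1 + c2.+1).+1 0 0 0)].
Proof.
rewrite /Ncnt /Nsum /Lt !big_cons !big_nil /validf /szn /sel /wtn /wA /leafcount /=.
split.
- by apply: (lt_cert (d := 15 + 3*c2 + 3*c1 + 3*b1 + 3*a)); ring.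
- by apply: (lt_cert (d := 11 + 6*c2 + 6*c1 + 4*c1*c2 + 6*b1 + 3*b1*c2 + 3*b1*c1 + 2*b1*c1*c2 + 4*a + 2*a*c2 + 2*a*c1 + 2*a*c1*c2 + 2*a*b1 + a*b1*c2 + a*b1*c1 + a*b1*c1*c2)); ring.
- by apply: (lt_cert (d := 175 + 150*c2 + 21*c2*c2 + 150*c1 + 138*c1*c2 + 17*c1*c2*c2 + 21*c1*c1 + 17*c1*c1*c2 + 134*b1 + 107*b1*c2 + 12*b1*c2*c2 + 107*b1*c1 + 97*b1*c1*c2 + 10*b1*c1*c2*c2 + 12*b1*c1*c1 + 10*b1*c1*c1*c2 + 18*b1*b1 + 12*b1*b1*c2 + 12*b1*b1*c1 + 10*b1*b1*c1*c2 + 110*a + 91*a*c2 + 10*a*c2*c2 + 91*a*c1 + 93*a*c1*c2 + 10*a*c1*c2*c2 + 10*a*c1*c1 + 10*a*c1*c1*c2 + 72*a*b1 + 57*a*b1*c2 + 5*a*b1*c2*c2 + 57*a*b1*c1 + 58*a*b1*c1*c2 + 5*a*b1*c1*c2*c2 + 5*a*b1*c1*c1 + 5*a*b1*c1*c1*c2 + 7*a*b1*b1 + 5*a*b1*b1*c2 + 5*a*b1*b1*c1 + 5*a*b1*b1*c1*c2 + 14*a*a + 10*a*a*c2 + 10*a*a*c1 + 10*a*a*c1*c2 + 7*a*a*b1 + 5*a*a*b1*c2 + 5*a*a*b1*c1 + 5*a*a*b1*c1*c2)); ring.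
Qed.

Lemma case_1100 (a b1 b2 : nat) :
  [/\ 0 < Ncnt (leafcount 0 (a + b1.+1 + b2.+1 + 0 + 0).+1 0 0 0), 0 < Ncnt (leafcount a.+1 b1.+1 b2.+1 0 0) &
   Nsum (leafcount 0 (a + b1.+1 + b2.+1 + 0 + 0).+1 0 0 0) * Ncnt (leafcount a.+1 b1.+1 b2.+1 0 0) < Nsum (leafcount a.+1 b1.+1 b2.+1 0 0) * Ncnt (leafcount 0 (a + b1.+1 + b2.+1 + 0 + 0).+1 0 0 0)].
Proof.
rewrite /Ncnt /Nsum /Lt !big_cons !big_nil /validf /szn /sel /wtn /wA /leafcount /=.
split.
- by apply: (lt_cert (d := 12 + 3*b2 + 3*b1 + 3*a)); ring.
- by apply: (lt_cert (d := 7 + 4*b2 + 4*b1 + 3*b1*b2 + 2*a + a*b2 + a*b1 + a*b1*b2)); ring.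
- by apply: (lt_cert (d := 66 + 66*b2 + 11*b2*b2 + 66*b1 + 65*b1*b2 + 9*b1*b2*b2 + 11*b1*b1 + 9*b1*b1*b2 + 46*a + 41*a*b2 + 5*a*b2*b2 + 41*a*b1 + 42*a*b1*b2 + 5*a*b1*b2*b2 + 5*a*b1*b1 + 5*a*b1*b1*b2 + 7*a*a + 5*a*a*b2 + 5*a*a*b1 + 5*a*a*b1*b2)); ring.
Qed.

Lemma case_1101 (a b1 b2 c2 : nat) :
  [/\ 0 < Ncnt (leafcount 0 (a + b1.+1 + b2.+1 + 0 + c2.+1).+1 0 0 0), 0 < Ncnt (leafcount a.+1 b1.+1 b2.+1 0 c2.+1) &
   Nsum (leafcount 0 (a + b1.+1 + b2.+1 + 0 + c2.+1).+1 0 0 0) * Ncnt (leafcount a.+1 b1.+1 b2.+1 0 c2.+1) < Nsum (leafcount a.+1 b1.+1 b2.+1 0 c2.+1) * Ncnt (leafcount 0 (a + b1.+1 + b2.+1 + 0 + c2.+1).+1 0 0 0)].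
Proof.
rewrite /Ncnt /Nsum /Lt !big_cons !big_nil /validf /szn /sel /wtn /wA /leafcount /=.
split.
- by apply: (lt_cert (d := 15 + 3*c2 + 3*b2 + 3*b1 + 3*a)); ring.
- by apply: (lt_cert (d := 11 + 6*c2 + 6*b2 + 3*b2*c2 + 6*b1 + 3*b1*c2 + 4*b1*b2 + 2*b1*b2*c2 + 4*a + 2*a*c2 + 2*a*b2 + a*b2*c2 + 2*a*b1 + a*b1*c2 + 2*a*b1*b2 + a*b1*b2*c2)); ring.
- by apply: (lt_cert (d := 175 + 134*c2 + 18*c2*c2 + 150*b2 + 107*b2*c2 + 12*b2*c2*c2 + 21*b2*b2 + 12*b2*b2*c2 + 150*b1 + 107*b1*c2 + 12*b1*c2*c2 + 138*b1*b2 + 97*b1*b2*c2 + 10*b1*b2*c2*c2 + 17*b1*b2*b2 + 10*b1*b2*b2*c2 + 21*b1*b1 + 12*b1*b1*c2 + 17*b1*b1*b2 + 10*b1*b1*b2*c2 + 110*a + 72*a*c2 + 7*a*c2*c2 + 91*a*b2 + 57*a*b2*c2 + 5*a*b2*c2*c2 + 10*a*b2*b2 + 5*a*b2*b2*c2 + 91*a*b1 + 57*a*b1*c2 + 5*a*b1*c2*c2 + 93*a*b1*b2 + 58*a*b1*b2*c2 + 5*a*b1*b2*c2*c2 + 10*a*b1*b2*b2 + 5*a*b1*b2*b2*c2 + 10*a*b1*b1 + 5*a*b1*b1*c2 + 10*a*b1*b1*b2 + 5*a*b1*b1*b2*c2 + 14*a*a + 7*a*a*c2 + 10*a*a*b2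 + 5*a*a*b2*c2 + 10*a*a*b1 + 5*a*a*b1*c2 + 10*a*a*b1*b2 + 5*a*a*b1*b2*c2)); ring.
Qed.

Lemma case_1110 (a b1 b2 c1 : nat) :
  [/\ 0 < Ncnt (leafcount 0 (a + b1.+1 + b2.+1 + c1.+1 + 0).+1 0 0 0), 0 < Ncnt (leafcount a.+1 b1.+1 b2.+1 c1.+1 0) &
   Nsum (leafcount 0 (a + b1.+1 + b2.+1 + c1.+1 + 0).+1 0 0 0) * Ncnt (leafcount a.+1 b1.+1 b2.+1 c1.+1 0) < Nsum (leafcount a.+1 b1.+1 b2.+1 c1.+1 0) * Ncnt (leafcount 0 (a + b1.+1 + b2.+1 + c1.+1 + 0).+1 0 0 0)].
Proof.
rewrite /Ncnt /Nsum /Lt !big_cons !big_nil /validf /szn /sel /wtn /wA /leafcount /=.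
split.
- by apply: (lt_cert (d := 15 + 3*c1 + 3*b2 + 3*b1 + 3*a)); ring.
- by apply: (lt_cert (d := 11 + 6*c1 + 6*b2 + 3*b2*c1 + 6*b1 + 3*b1*c1 + 4*b1*b2 + 2*b1*b2*c1 + 4*a + 2*a*c1 + 2*a*b2 + a*b2*c1 + 2*a*b1 + a*b1*c1 + 2*a*b1*b2 + a*b1*b2*c1)); ring.
- by apply: (lt_cert (d := 175 + 134*c1 + 18*c1*c1 + 150*b2 + 107*b2*c1 + 12*b2*c1*c1 + 21*b2*b2 + 12*b2*b2*c1 + 150*b1 + 107*b1*c1 + 12*b1*c1*c1 + 138*b1*b2 + 97*b1*b2*c1 + 10*b1*b2*c1*c1 + 17*b1*b2*b2 + 10*b1*b2*b2*c1 + 21*b1*b1 + 12*b1*b1*c1 + 17*b1*b1*b2 + 10*b1*b1*b2*c1 + 110*a + 72*a*c1 + 7*a*c1*c1 + 91*a*b2 + 57*a*b2*c1 + 5*a*b2*c1*c1 + 10*a*b2*b2 + 5*a*b2*b2*c1 + 91*a*b1 + 57*a*b1*c1 + 5*a*b1*c1*c1 + 93*a*b1*b2 + 58*a*b1*b2*c1 + 5*a*b1*b2*c1*c1 + 10*a*b1*b2*b2 + 5*a*b1*b2*b2*c1 + 10*a*b1*b1 + 5*a*b1*b1*c1 + 10*a*b1*b1*b2 + 5*a*b1*b1*b2*c1 + 14*a*a + 7*a*a*c1 + 10*a*a*b2 + 5*a*a*b2*c1 + 10*a*a*b1 + 5*a*a*b1*c1 + 10*a*a*b1*b2 + 5*a*a*b1*b2*c1));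 ring.
Qed.

Lemma case_1111 (a b1 b2 c1 c2 : nat) :
  [/\ 0 < Ncnt (leafcount 0 (a + b1.+1 + b2.+1 + c1.+1 + c2.+1).+1 0 0 0), 0 < Ncnt (leafcount a.+1 b1.+1 b2.+1 c1.+1 c2.+1) &
   Nsum (leafcount 0 (a + b1.+1 + b2.+1 + c1.+1 + c2.+1).+1 0 0 0) * Ncnt (leafcount a.+1 b1.+1 b2.+1 c1.+1 c2.+1) < Nsum (leafcount a.+1 b1.+1 b2.+1 c1.+1 c2.+1) * Ncnt (leafcount 0 (a + b1.+1 + b2.+1 + c1.+1 + c2.+1).+1 0 0 0)].
Proof.
rewrite /Ncnt /Nsum /Lt !big_cons !big_nil /validf /szn /sel /wtn /wA /leafcount /=.
split.
- by apply: (lt_cert (d := 18 + 3*c2 + 3*c1 + 3*b2 + 3*b1 + 3*a)); ring.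
- by apply: (lt_cert (d := 11 + 6*c2 + 6*c1 + 4*c1*c2 + 6*b2 + 3*b2*c2 + 3*b2*c1 + 2*b2*c1*c2 + 6*b1 + 3*b1*c2 + 3*b1*c1 + 2*b1*c1*c2 + 4*b1*b2 + 2*b1*b2*c2 + 2*b1*b2*c1 + b1*b2*c1*c2 + 4*a + 2*a*c2 + 2*a*c1 + 2*a*c1*c2 + 2*a*b2 + a*b2*c2 + a*b2*c1 + a*b2*c1*c2 + 2*a*b1 + a*b1*c2 + a*b1*c1 + a*b1*c1*c2 + 2*a*b1*b2 + a*b1*b2*c2 + a*b1*b2*c1 + a*b1*b2*c1*c2)); ring.
- by apply: (lt_cert (d := 319 + 246*c2 + 30*c2*c2 + 246*c1 + 211*c1*c2 + 23*c1*c2*c2 + 30*c1*c1 + 23*c1*c1*c2 + 246*b2 + 178*b2*c2 + 18*b2*c2*c2 + 178*b2*c1 + 144*b2*c1*c2 + 13*b2*c1*c2*c2 + 18*b2*c1*c1 + 13*b2*c1*c1*c2 + 30*b2*b2 + 18*b2*b2*c2 + 18*b2*b2*c1 + 13*b2*b2*c1*c2 + 246*b1 + 178*b1*c2 + 18*b1*c2*c2 + 178*b1*c1 + 144*b1*c1*c2 + 13*b1*c1*c2*c2 + 18*b1*c1*c1 + 13*b1*c1*c1*c2 + 211*b1*b2 + 144*b1*b2*c2 + 13*b1*b2*c2*c2 + 144*b1*b2*c1 + 104*b1*b2*c1*c2 + 8*b1*b2*c1*c2*c2 + 13*b1*b2*c1*c1 + 8*b1*b2*c1*c1*c2 + 23*b1*b2*b2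 + 13*b1*b2*b2*c2 + 13*b1*b2*b2*c1 + 8*b1*b2*b2*c1*c2 + 30*b1*b1 + 18*b1*b1*c2 + 18*b1*b1*c1 + 13*b1*b1*c1*c2 + 23*b1*b1*b2 + 13*b1*b1*b2*c2 + 13*b1*b1*b2*c1 + 8*b1*b1*b2*c1*c2 + 180*a + 135*a*c2 + 13*a*c2*c2 + 135*a*c1 + 134*a*c1*c2 + 13*a*c1*c2*c2 + 13*a*c1*c1 + 13*a*c1*c1*c2 + 135*a*b2 + 96*a*b2*c2 + 8*a*b2*c2*c2 + 96*a*b2*c1 + 94*a*b2*c1*c2 + 8*a*b2*c1*c2*c2 + 8*a*b2*c1*c1 + 8*a*b2*c1*c1*c2 + 13*a*b2*b2 + 8*a*b2*b2*c2 + 8*a*b2*b2*c1 + 8*a*b2*b2*c1*c2 + 135*a*b1 + 96*a*b1*c2 + 8*a*b1*c2*c2 + 96*a*b1*c1 + 94*a*b1*c1*c2 + 8*a*b1*c1*c2*c2 + 8*a*b1*c1*c1 + 8*a*b1*c1*c1*c2 + 134*a*b1*b2 + 94*a*b1*b2*c2 + 8*a*b1*b2*c2*c2 + 94*a*b1*b2*c1 + 92*a*b1*b2*c1*c2 + 8*a*b1*b2*c1*c2*c2 + 8*a*b1*b2*c1*c1 + 8*a*b1*b2*c1*c1*c2 + 13*a*b1*b2*b2 + 8*a*b1*b2*b2*c2 + 8*a*b1*b2*b2*c1 + 8*a*b1*b2*b2*c1*c2 + 13*a*b1*b1 + 8*a*b1*b1*c2 + 8*a*b1*b1*c1 + 8*a*b1*b1*c1*c2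 + 13*a*b1*b1*b2 + 8*a*b1*b1*b2*c2 + 8*a*b1*b1*b2*c1 + 8*a*b1*b1*b2*c1*c2 + 20*a*a + 13*a*a*c2 + 13*a*a*c1 + 13*a*a*c1*c2 + 13*a*a*b2 + 8*a*a*b2*c2 + 8*a*a*b2*c1 + 8*a*a*b2*c1*c2 + 13*a*a*b1 + 8*a*a*b1*c2 + 8*a*a*b1*c1 + 8*a*a*b1*c1*c2 + 13*a*a*b1*b2 + 8*a*a*b1*b2*c2 + 8*a*a*b1*b2*c1 + 8*a*a*b1*b2*c1*c2)); ring.
Qed.

Theorem lemma3p4 (a b1 b2 c1 c2 d n : nat) :
  (1 <= a)%N ->
  d = count (fun x => 0 < x)%N [:: b1; b2; c1; c2] ->
  (1 <= d <= 4)%N ->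
  n = (5 + a + b1 + b2 + c1 + c2)%N ->
  (avm (@pend_rel (R33 n)) < avm (@pend_rel (leafcount a b1 b2 c1 c2)))%R.
Proof.
move=> ha -> hd hn.
case: a ha hn => [//|a] _ hn.
have hM : n - 5 = (a + b1 + b2 + c1 + c2).+1 by lia.
clear hn.
rewrite /R33 hM !avm_formula.
apply: frac_lt.
case: b1 hd hM => [|b1] hd hM; case: b2 hd hM => [|b2] hd hM;
  case: c1 hd hM => [|c1] hd hM; case: c2 hd hM => [|c2] hd hM.
- by move: hd.
- exact: (case_0001 a c2).
- exact: (case_0010 a c1).
- exact: (case_0011 a c1 c2).
- exact: (case_0100 a b2).
- exact: (case_0101 a b2 c2).
- exact: (case_0110 a b2 c1).
- exact: (case_0111 a b2 c1 c2).
- exact: (case_1000 a b1).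
- exact: (case_1001 a b1 c2).
- exact: (case_1010 a b1 c1).
- exact: (case_1011 a b1 c1 c2).
- exact: (case_1100 a b1 b2).
- exact: (case_1101 a b1 b2 c2).
- exact: (case_1110 a b1 b2 c1).
- exact: (case_1111 a b1 b2 c1 c2).
Qed.
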